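(* Let $p\in(0,1)$ and let $(\lambda_n)_{n\ge1}$ be a sequence with $\lambda_1=1$ and $0\le\lambda_n\le\lambda_{n-1}$ for all $n>1$. Let $r_1,r_2,\dots$ be $\{0,1\}$-valued random variables with $\Pr(r_1=1)=p$ and, for every $n\ge2$, $\Pr(r_n=1\mid r_1,\dots,r_{n-1})=\lambda_n p+(1-\lambda_n)\bar p_{n-1}$, where $\bar p_m=\frac1m\sum_{i=1}^m r_i$. For values $\hat\lambda_k\in(0,1]$, $k\ge2$, define $\hat r_1=r_1$ and $\hat r_k=\frac{r_k-(1-\hat\lambda_k)\bar p_{k-1}}{\hat\lambda_k}$ for $k\ge2$. Let $i>j\ge1$ with $\lambda_i>0$ and $\hat\lambda_i=\lambda_i$. Then $\hat r_i$ and $\hat r_j$ are uncorrelated, i.e. $\mathbb{E}[\hat r_i\hat r_j]=\mathbb{E}[\hat r_i]\,\mathbb{E}[\hat r_j]$. *)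

(* Defs.v *)
From HB Require Import structures.
From mathcomp Require Import all_boot all_order all_algebra.
From mathcomp Require Import all_classical all_reals all_analysis.
Set Implicit Arguments. Unset Strict Implicit. Unset Printing Implicit Defensive.
Import Order.TTheory GRing.Theory Num.Theory.
Local Open Scope ring_scope.
Local Open Scope classical_set_scope.

(* Indices start at 1; the value of sequences at index 0 is irrelevant. *)

Definition pbar {T : Type} {R : realType} (r : nat -> T -> R) (m : nat) (t : T) : R :=
  (\sum_(1 <= k < m.+1) r k t) / m%:R.

Definition rhat {T : Type} {R : realType} (r : nat -> T -> R) (lh : nat -> R)
  (k : nat) (t : T) : R :=
  if (k <= 1)%N then r 1%N t
  else (r k t - (1 - lh k) * pbar r k.-1 t) / lh k.

Definition prefix_event {T : Type} {R : realType} (r : nat -> T -> R)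
  (n : nat) (a : nat -> bool) : set T :=
  [set t | forall k, (1 <= k < n)%N -> r k t = (a k)%:R].

(* The model: r_n are {0,1}-valued random variables, P(r_1 = 1) = p and
   P(r_n = 1 | r_1,...,r_{n-1}) = lam_n p + (1 - lam_n) pbar_{n-1}, the
   conditional probability (given finitely-valued variables) being expressed
   atom-wise by  P(A_a /\ r_n = 1) = (lam_n p + (1-lam_n) mean(a)) P(A_a)
   for every prefix atom A_a. *)
Definition reinforced_model {d} {T : measurableType d} {R : realType}
  (P : probability T R) (p : R) (lam : nat -> R) (r : nat -> T -> R) : Prop :=
  [/\ (forall n, (1 <= n)%N -> measurable_fun setT (r n)),
      (forall n t, (1 <= n)%N -> r n t = 0 \/ r n t = 1),
      P [set t | r 1%N t = 1] = p%:E &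
      (forall n (a : nat -> bool), (2 <= n)%N ->
         P (prefix_event r n a `&` [set t | r n t = 1]) =
         ((lam n * p + (1 - lam n) *
            ((\sum_(1 <= k < n) (a k)%:R) / n.-1%:R))%:E * P (prefix_event r n a))%E)].

(* Main.v *)
Require Import Defs.
From HB Require Import structures.
From mathcomp Require Import all_boot all_order all_algebra.
From mathcomp Require Import all_classical all_reals all_analysis.
From mathcomp Require Import ring.
Import Order.TTheory GRing.Theory Num.Theory.
Local Open Scope ring_scope.
Local Open Scope classical_set_scope.

Definition bt {T : Type} {R : realType} (r : nat -> T -> R) (m : nat) (t : T)
  : {ffun 'I_m -> bool} := [ffun k : 'I_m => r (k : nat).+1 t == 1].
Definition atom {T : Type} {R : realType} (r : nat -> T -> R) (m : nat)
  (b : {ffun 'I_m -> bool}) : set T :=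
  [set t | forall k : 'I_m, r (k : nat).+1 t = (b k)%:R].
Definition conv (m : nat) (b : {ffun 'I_m -> bool}) (k : nat) : bool :=
  if @insub _ _ 'I_m k.-1 is Some k' then b k' else false.

Arguments conv {m}.
Lemma conv_val m (b : {ffun 'I_m -> bool}) (k : 'I_m) : conv b (k : nat).+1 = b k.
Proof. by rewrite /conv /= valK. Qed.

Lemma atom_bt {T : Type} {R : realType} (r : nat -> T -> R) m b t :
  (forall n, (1 <= n)%N -> r n t = 0 \/ r n t = 1) ->
  atom r m b t <-> b = bt r m t.
Proof.
move=> r01; split.
- move=> H; apply/ffunP => k; rewrite ffunE H.
  by case: (b k) => /=; [rewrite eqxx | rewrite eq_sym oner_eq0].
- move=> -> k /=; rewrite ffunE.
  by case: (r01 (k : nat).+1 isT) => ->; rewrite ?eqxx // eq_sym oner_eq0.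
Qed.

Lemma decomp {T : Type} {R : realType} (r : nat -> T -> R) m
  (g : {ffun 'I_m -> bool} -> R) t :
  (forall n, (1 <= n)%N -> r n t = 0 \/ r n t = 1) ->
  g (bt r m t) = \sum_b g b * \1_(atom r m b) t.
Proof.
move=> r01; rewrite (bigD1 (bt r m t)) //= big1 ?addr0.
  by rewrite indicE mem_set ?mulr1 //; apply/atom_bt.
move=> b hb; rewrite indicE memNset ?mulr0 //.
by move/(@atom_bt _ _ r m b t r01) => E; rewrite E eqxx in hb.
Qed.

Lemma prefix_atom {T : Type} {R : realType} (r : nat -> T -> R) m b :
  prefix_event r m.+1 (conv b) = atom r m b.
Proof.
apply/seteqP; split => t /= H.
- by move=> k; rewrite H ?conv_val //= ltnS ltn_ord.
- move=> [|k] //= ; rewrite ltnS => km.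
  by have := H (Ordinal km); rewrite -(@conv_val m b (Ordinal km)).
Qed.

Lemma atom_meas {d} {T : measurableType d} {R : realType} (r : nat -> T -> R) m b :
  (forall n, (1 <= n)%N -> measurable_fun setT (r n)) ->
  measurable (atom r m b).
Proof.
move=> mr.
have -> : atom r m b = \bigcap_(k in [set: 'I_m]) (r (k : nat).+1 @^-1` [set (b k)%:R]).
  by apply/seteqP; split => t /= H k; [move=> _; exact: H | exact: H].

apply: fin_bigcap_measurable => // k _.
by rewrite -[X in measurable X]setTI; apply: mr.
Qed.

Lemma pbar_ext {T T' : Type} {R : realType} (r : nat -> T -> R) (r' : nat -> T' -> R)
   m t t' : (forall k, (1 <= k < m.+1)%N -> r k t = r' k t') ->
   pbar r m t = pbar r' m t'.
Proof. by move=> H; rewrite /pbar; congr (_ / _); apply: eq_big_nat. Qed.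

Lemma rhat_ext {T T' : Type} {R : realType} (r : nat -> T -> R) (r' : nat -> T' -> R)
   lh j t t' : (1 <= j)%N -> (forall k, (1 <= k < j.+1)%N -> r k t = r' k t') ->
   rhat r lh j t = rhat r' lh j t'.
Proof.
move=> j1 H; rewrite /rhat; case: ifP => j2; first by apply: H.
rewrite H ?leqnn ?j1 //; congr ((_ - _ * _) / _).
apply: pbar_ext => k /andP[k1 k2]; apply: H; rewrite k1 /=.
by move: k2; rewrite prednK // => k2; exact: ltnW.

Qed.
Lemma L_int d (T : measurableType d) (R : realType) (P : probability T R)
  (I : finType) (k k' : I -> R) (B B' : I -> set T) :
  (forall i, measurable (B i)) -> (forall i, measurable (B' i)) ->
  'E_P[fun t => (\sum_i (k i * \1_(B i) t + k' i * \1_(B' i) t))%R]%E =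
  (\sum_i (k i * fine (P (B i)) + k' i * fine (P (B' i))))%:E.
Proof.
move=> mB mB'; rewrite unlock.
under eq_integral do rewrite -sumEFin.
rewrite integral_sum //; last first.
  move=> i; under eq_fun do rewrite EFinD.
  apply: integrableD => //; under eq_fun do rewrite EFinM;
  by apply: integrableZl => //; apply: integrable_indic.
rewrite -sumEFin; apply: eq_bigr => i _.
under eq_integral do rewrite EFinD.
rewrite integralD //; last first.
- by under eq_fun do rewrite EFinM; apply: integrableZl => //; apply: integrable_indic.
- by under eq_fun do rewrite EFinM; apply: integrableZl => //; apply: integrable_indic.
under eq_integral do rewrite EFinM.
rewrite integralZl //; last by apply: integrable_indic.
under [X in (_ + X)%E]eq_integral do rewrite EFinM.
rewrite integralZl //; last by apply: integrable_indic.
rewrite !integral_indic // !setIT EFinD !EFinM !fineK //; exact: fin_num_measure.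
Qed.

Definition rr {R : realType} m (b : {ffun 'I_m -> bool}) : nat -> unit -> R :=
  fun k _ => (conv b k)%:R.

Arguments rr {R m}.
Lemma key d (T : measurableType d) (R : realType) (P : probability T R) (p : R)
  (lam : nat -> R) (r : nat -> T -> R) m (h0 h1 : {ffun 'I_m -> bool} -> R) :
  reinforced_model P p lam r -> (1 <= m)%N ->
  'E_P[fun t => (h1 (bt r m t) * r m.+1 t + h0 (bt r m t))%R]%E =
  (\sum_b (h1 b * (lam m.+1 * p + (1 - lam m.+1) *
      pbar (rr b) m tt) + h0 b)
      * fine (P (atom r m b)))%:E.
Proof.
case=> mr r01 _ hP m1.
have mR : measurable [set t | r m.+1 t = 1].
  by have := mr m.+1 isT measurableT [set 1] (measurable_set1 _); rewrite setTI.
have -> : (fun t => h1 (bt r m t) * r m.+1 t + h0 (bt r m t)) =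
    fun t => (\sum_b (h1 b * \1_(atom r m b `&` [set t | r m.+1 t = 1]) t
                      + h0 b * \1_(atom r m b) t))%R.
  apply/funext => t; have r01t := fun n hn => r01 n t hn.
  rewrite big_split /= -(decomp r m h0 t r01t); congr (_ + _).
  under eq_bigr do rewrite indicI /= mulrA.
  rewrite -mulr_suml -(decomp r m h1 t r01t); congr (_ * _).
  rewrite indicE; case: (r01t m.+1 isT) => E; rewrite E.
    by rewrite memNset //= E => /esym/eqP; rewrite oner_eq0.
  by rewrite mem_set.
rewrite L_int; first last.
- by move=> b; apply: atom_meas.
- by move=> b; apply: measurableI => //; apply: atom_meas.
congr EFin; apply: eq_bigr => b _.
have := hP m.+1 (conv b) m1; rewrite prefix_atom.
move=> ->; rewrite fineM ?fin_num_measure //=.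
rewrite /pbar /rr; by ring. exact: atom_meas.
Qed.

Local Close Scope classical_set_scope.

Theorem lemmaA12 (d : measure_display) (T : measurableType d) (R : realType)
  (P : probability T R) (p : R) (lam lh : nat -> R) (r : nat -> T -> R)
  (i j : nat) :
  0 < p < 1 ->
  lam 1%N = 1 ->
  (forall n, (1 < n)%N -> 0 <= lam n <= lam n.-1) ->
  reinforced_model P p lam r ->
  (forall k, (2 <= k)%N -> 0 < lh k <= 1) ->
  (1 <= j)%N -> (j < i)%N ->
  0 < lam i -> lh i = lam i ->
  ('E_P[rhat r lh i \* rhat r lh j] = 'E_P[rhat r lh i] * 'E_P[rhat r lh j])%E.
Proof.
move=> _ _ _ model _ j1.
case: i => [//|m] ji lam0 lhi.
have m1 : (1 <= m)%N by apply: leq_trans j1 _.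
have jm : (j <= m)%N by [].
have lamn0 : lam m.+1 != 0 by rewrite gt_eqF.
have model' := model; case: model' => mr r01 _ _.
pose Pr b := fine (P (atom r m b)).
pose gj (b : {ffun 'I_m -> bool}) := rhat (rr b) lh j tt.
pose gp b := pbar (@rr R m b) m tt.
have hr t k : (1 <= k < m.+1)%N -> r k t = rr (bt r m t) k tt.
  have : atom r m (bt r m t) t by apply/atom_bt => // n hn; apply: r01.
  by rewrite -prefix_atom => H /H.
have Hj t : rhat r lh j t = gj (bt r m t).
  apply: rhat_ext => // k /andP[k1 k2]; apply: hr; rewrite k1 /=.
  exact: leq_trans k2 _.
have Hp t : pbar r m t = gp (bt r m t) by apply: pbar_ext => k; apply: hr.
have Hi t : rhat r lh m.+1 t =
    (lam m.+1)^-1 * r m.+1 t + - ((1 - lam m.+1) * gp (bt r m t)) / lam m.+1.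
  rewrite /rhat ifF; last by rewrite ltnS leqNgt m1.
  rewrite lhi /= Hp; by ring.
pose H1 (b : {ffun 'I_m -> bool}) := gj b / lam m.+1.
pose H0 (b : {ffun 'I_m -> bool}) := - ((1 - lam m.+1) * gp b) / lam m.+1 * gj b.
have E1 : 'E_P[rhat r lh m.+1 \* rhat r lh j]%E = (p * \sum_b gj b * Pr b)%:E.
  transitivity ('E_P[fun t => (H1 (bt r m t) * r m.+1 t + H0 (bt r m t))%R])%E.
    by f_equal; apply/funext => t /=; rewrite Hi Hj /H1 /H0; ring.
  rewrite (key _ _ _ _ _ _ _ _ H0 H1 model m1); congr EFin.
  rewrite mulr_sumr; apply: eq_bigr => b _; rewrite /H1 /H0 -/(gp b).
  by rewrite /Pr; field.
pose K1 (b : {ffun 'I_m -> bool}) := (lam m.+1)^-1.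
pose K0 (b : {ffun 'I_m -> bool}) := - ((1 - lam m.+1) * gp b) / lam m.+1.
have E2 : 'E_P[rhat r lh m.+1]%E = (p * \sum_b Pr b)%:E.
  transitivity ('E_P[fun t => (K1 (bt r m t) * r m.+1 t + K0 (bt r m t))%R])%E.
    by f_equal; apply/funext => t /=; rewrite Hi.
  rewrite (key _ _ _ _ _ _ _ _ K0 K1 model m1); congr EFin.
  rewrite mulr_sumr; apply: eq_bigr => b _; rewrite /K1 /K0 /Pr -/(gp b).
  by field.
pose Z1 (b : {ffun 'I_m -> bool}) : R := 0.
have E3 : 'E_P[rhat r lh j]%E = (\sum_b gj b * Pr b)%:E.
  transitivity ('E_P[fun t => (Z1 (bt r m t) * r m.+1 t + gj (bt r m t))%R])%E.
    by f_equal; apply/funext => t /=; rewrite Hj /Z1 mul0r add0r.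
  rewrite (key _ _ _ _ _ _ _ _ gj Z1 model m1); congr EFin.
  by apply: eq_bigr => b _; rewrite /Z1 mul0r add0r.
pose O1 (b : {ffun 'I_m -> bool}) : R := 1.
have E4 : (\sum_b Pr b) = 1.
  have : 'E_P[cst 1%R]%E = 1%:E by rewrite expectation_cst.
  have -> : cst 1%R = fun t => (Z1 (bt r m t) * r m.+1 t + O1 (bt r m t))%R.
    by apply/funext => t /=; rewrite /Z1 /O1 mul0r add0r.
  rewrite (key _ _ _ _ _ _ _ _ O1 Z1 model m1) => -[] <-.
  by apply: eq_bigr => b _; rewrite /Z1 /O1 mul0r add0r mul1r.
by rewrite E1 E2 E3 E4 mulr1 -EFinM.
Qed.
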